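(* Let $\mathcal{M}$ be a matroid on $[n]$, $J=J(\mathcal{M})$, and let $N$ be a monomial. (1) If $N\notin J$, then $SF_\ell(J:N)=SF_\ell(J):N$ for all $\ell\ge1$. (2) If $N\in G(J)$, then for every $v$ with $x_v\mid N$ and every $\ell>1$, $$SF_\ell(J):N=SF_{\ell-1}\big(J(\mathcal{M}/v):N\big).$$
   Context: $R=\mathbb{K}[x_1,\ldots,x_n]$, $\mathbb{K}$ a field; $\mathfrak p_F=(x_i:i\in F)$. The cover ideal of a matroid $\mathcal{N}$ on $E\subseteq[n]$ is $J(\mathcal{N})=\bigcap_{F\in\mathcal{B}(\mathcal{N})}\mathfrak p_F$, formed in $\mathbb{K}[x_i:i\in E]$ and extended to $R$. $\mathcal{M}/v$ is the contraction of $\mathcal{M}$ by $\{v\}$ (a matroid on $[n]-\{v\}$). For a squarefree monomial ideal $I$ with minimal primes $\mathfrak q_j$, $I^{(\ell)}=\bigcap_j\mathfrak q_j^\ell$ and $SF_\ell(I)$ is the ideal generated by the squarefree monomials in $I^{(\ell)}$ ($SF_\ell(I)=0$ if there are none). $G(\cdot)$ denotes minimal monomial generators. *)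

(* Defs.v *)
(* Monomials of R = K[x_1..x_n] are exponent vectors on 'I_n
   (variable x_i <-> index i : 'I_n). Every ideal occurring in the statement is a
   monomial ideal, and is represented by the (upward closed) set of monomials it
   contains; two monomial ideals are equal iff they contain the same monomials. *)
From mathcomp Require Import all_boot.
Set Implicit Arguments. Unset Strict Implicit. Unset Printing Implicit Defensive.

Definition mon (n : nat) := {ffun 'I_n -> nat}.
Definition mmul n (a b : mon n) : mon n := [ffun i => a i + b i].
Definition mdiv n (a b : mon n) : Prop := forall i, a i <= b i.
Definition sqfree n (a : mon n) : Prop := forall i, a i <= 1.

Definition mideal (n : nat) := mon n -> Prop.
Definition ideal_eq n (I1 I2 : mideal n) : Prop := forall m, I1 m <-> I2 m.

(* monomial prime p_F = (x_i : i in F): contains x^a iff some i in F has a_i > 0 *)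
Definition in_pF n (F : {set 'I_n}) (m : mon n) : bool := [exists i in F, 0 < m i].
(* p_F^l contains x^a iff sum_{i in F} a_i >= l *)
Definition in_pF_pow n (F : {set 'I_n}) (l : nat) (m : mon n) : bool :=
  l <= \sum_(i in F) m i.

Definition is_matroid n (E : {set 'I_n}) (B : {set {set 'I_n}}) : Prop :=
  [/\ B != set0,
      (forall F, F \in B -> F \subset E) &
      (forall B1 B2, B1 \in B -> B2 \in B -> forall x, x \in B1 :\: B2 ->
         exists2 y, y \in B2 :\: B1 & (y |: (B1 :\ x)) \in B)].

Definition mrank n (B : {set {set 'I_n}}) (T : {set 'I_n}) : nat :=
  \max_(F in B) #|F :&: T|.

(* contraction M/T : bases are B - T with B in B(M) and B :&: T a basis of M|T *)
Definition contract n (B : {set {set 'I_n}}) (T : {set 'I_n}) : {set {set 'I_n}} :=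
  [set F :\: T | F in [set F in B | #|F :&: T| == mrank B T]].

Definition coverJ n (B : {set {set 'I_n}}) : mideal n :=
  fun m => forall F, F \in B -> in_pF F m.

Definition colon n (I : mideal n) (N : mon n) : mideal n := fun m => I (mmul m N).

Definition minprime n (I : mideal n) (F : {set 'I_n}) : Prop :=
  (forall m, I m -> in_pF F m) /\
  (forall G : {set 'I_n}, G \proper F -> ~ (forall m, I m -> in_pF G m)).

Definition symb n (I : mideal n) (l : nat) : mideal n :=
  fun m => forall F, minprime I F -> in_pF_pow F l m.

Definition SF n (I : mideal n) (l : nat) : mideal n :=
  fun m => exists s : mon n, [/\ sqfree s, symb I l s & mdiv s m].

Definition mingen n (I : mideal n) (N : mon n) : Prop :=
  I N /\ (forall M : mon n, mdiv M N -> M <> N -> ~ I M).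

(* Main.v *)
Require Import Defs.
From mathcomp Require Import all_boot.
Set Implicit Arguments. Unset Strict Implicit. Unset Printing Implicit Defensive.

Section Aux.
Variable n : nat.

Definition exch (B : {set {set 'I_n}}) := forall B1 B2, B1 \in B -> B2 \in B ->
  forall x, x \in B1 :\: B2 -> exists2 y, y \in B2 :\: B1 & (y |: (B1 :\ x)) \in B.
Definition antichain (C : {set {set 'I_n}}) := forall F1 F2, F1 \in C -> F2 \in C ->
  F1 \subset F2 -> F2 \subset F1.

Lemma exch_antichain B : exch B -> antichain B.
Proof.
move=> hex F1 F2 h1 h2 sub; apply/subsetP=> x xF2.
case: (boolP (x \in F1)) => // xF1.
have hx : x \in F2 :\: F1 by rewrite inE xF1 xF2.
have [y] := hex F2 F1 h2 h1 x hx.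
rewrite inE => /andP[/negP nF2 yF1] _; case: nF2; exact: (subsetP sub).
Qed.

Definition ind_out (G : {set 'I_n}) : mon n := [ffun i => if i \in G then 0 else 1].

Lemma minprime_cover (I : mideal n) (C : {set {set 'I_n}}) :
  (forall m, I m <-> forall F, F \in C -> in_pF F m) -> antichain C ->
  forall G, minprime I G <-> G \in C.
Proof.
move=> hI hac G; split.
- case=> ha hb.
  have [/existsP[F /andP[FC FG]]|nex] := boolP [exists F in C, F \subset G].
  + case: (eqVneq F G) => [<-//|neq].
    exfalso; apply: (hb F); first by rewrite properEneq neq FG.
    by move=> m /hI; apply.
  + exfalso.
    have : in_pF G (ind_out G).
      apply: ha; apply/hI => F FC.
      have : ~~ (F \subset G).
        by apply: contra nex => FG; apply/existsP; exists F; rewrite FC.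
      case/subsetPn => x xF xG; apply/existsP; exists x.
      by rewrite xF /ind_out ffunE (negbTE xG).
    by case/existsP => x; rewrite /ind_out ffunE; case: (x \in G).
- move=> GC; split.
  + by move=> m /hI; apply.
  + move=> G' /properP [sub [x xG xG']] hG'.
    have : in_pF G' (ind_out G').
      apply: hG'; apply/hI => F FC.
      case: (boolP (F \subset G')) => [FG'|].
        exfalso; have := hac _ _ FC GC (subset_trans FG' sub).
        move/subsetP/(_ x xG) => xF.
        by move: xG'; rewrite (subsetP FG' x xF).
      case/subsetPn => y yF yG'; apply/existsP; exists y.
      by rewrite yF /ind_out ffunE (negbTE yG').
    by case/existsP => y; rewrite /ind_out ffunE; case: (y \in G') => //; rewrite andbF.
Qed.

Lemma reach B (S : {set 'I_n}) G (t : 'I_n -> nat) l :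
  exch B -> G \in B ->
  (forall H, H \in B -> (forall x, x \in H -> x \in S -> x \in G) ->
     forall x, x \in G -> x \in S -> x \in H) ->
  (forall x, x \in S -> t x = 1) -> (forall x, t x <= 1) ->
  (forall H, H \in B -> (forall x, x \in S -> (x \in H) = (x \in G)) ->
     l <= \sum_(i in H) t i) ->
  forall H, H \in B -> l <= \sum_(i in H) t i.
Proof.
move=> hex GB hmin tS t1 hgood.
have hno : forall H, H \in B -> (forall x, x \in H -> x \in S -> x \in G) ->
    l <= \sum_(i in H) t i.
  move=> H HB hsub; apply: hgood => // x xS; apply/idP/idP => [xH|xG].
    exact: hsub. exact: hmin.
move=> H; move: {2}#|H :\: G| (leqnn #|H :\: G|) => k.
elim: k H => [|k IH] H hk HB;
  (have [/existsP [x /and3P [xH xS xG]] | nex] :=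
    boolP [exists x, [&& x \in H, x \in S & x \notin G]]);
  try by (apply: hno => // x xH xS; apply: contraNT nex => xG; apply/existsP; exists x;
  rewrite xH xS xG).
  move: hk; rewrite leqn0 cards_eq0 => /eqP HG.
  by move: (in_set0 x); rewrite -HG inE xG xH.
have hx : x \in H :\: G by rewrite inE xG xH.
have [y yGH H'B] := hex H G HB GB x hx.
move: (yGH); rewrite inE => /andP[yH yG].
have lt : #|(y |: (H :\ x)) :\: G| < #|H :\: G|.
  apply: proper_card; apply/properP; split.
  - apply/subsetP => z; rewrite !inE.
    case/andP => zG /orP [/eqP zy | /andP [_ ->]]; last by rewrite zG.
    by rewrite zy yG in zG.
  - exists x; first by rewrite !inE xG xH.
    rewrite !inE eqxx /= orbF negb_and negbK; apply/orP; right.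
    by apply/eqP => xy; move: xG; rewrite xy yG.
have := IH _ (leq_trans (ltnSE (leq_trans lt hk)) (leqnn k)) H'B.
move=> h; apply: leq_trans h _.
rewrite (big_setD1 x xH) big_setU1 /=.
  by rewrite leq_add2r (tS x xS).
by rewrite in_setD1 (negbTE yH) andbF.
Qed.

End Aux.

Definition tind n (N s : mon n) : mon n :=
  [ffun i => if (0 < s i) || (0 < N i) then 1 else 0].
Definition sN n (N s : mon n) : mon n := [ffun i => if N i == 0 then s i else 0].

Lemma tind_sq n (N s : mon n) : sqfree (tind N s).
Proof. by move=> i; rewrite ffunE; case: ifP. Qed.

Lemma tind_ge n (N s : mon n) : sqfree s -> forall i, s i <= tind N s i.
Proof.
move=> sq i; rewrite ffunE; case: (posnP (s i)) => [->//|sp].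
by rewrite /=; exact: sq.
Qed.

Lemma tind_div n (N s m : mon n) : mdiv s m -> mdiv (tind N s) (mmul m N).
Proof.
move=> sd i; rewrite /mmul !ffunE; case: ifP => // /orP [sp|Np].
  exact: leq_trans sp (leq_trans (sd i) (leq_addr _ _)).
exact: leq_trans Np (leq_addl _ _).
Qed.

Lemma sN_sq n (N s : mon n) : sqfree s -> sqfree (sN N s).
Proof. by move=> sq i; rewrite ffunE; case: ifP => // _; exact: sq. Qed.

Lemma sN_div n (N s m : mon n) : mdiv s (mmul m N) -> mdiv (sN N s) m.
Proof.
move=> sd i; rewrite ffunE; case: eqP => // Ni.
by have := sd i; rewrite /mmul ffunE Ni addn0.
Qed.

Theorem proposition3p13 (n : nat) (B : {set {set 'I_n}}) (N : mon n) :
  is_matroid setT B ->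
  (~ coverJ B N ->
     forall l, 1 <= l ->
       ideal_eq (SF (colon (coverJ B) N) l) (colon (SF (coverJ B) l) N)) /\
  (mingen (coverJ B) N ->
     forall v : 'I_n, 0 < N v -> forall l, 1 < l ->
       ideal_eq (colon (SF (coverJ B) l) N)
                (SF (colon (coverJ (contract B [set v])) N) (l - 1))).
Proof.
move=> [_ _ hex0].
have hex : exch B := hex0.
have hac := exch_antichain hex.
have minJ : forall F, minprime (coverJ B) F <-> F \in B.
  by apply: minprime_cover => // m.
set S := [set i | 0 < N i].
split.
- move=> nJ l _.
  have [G GB GS] : exists2 G, G \in B & forall i, i \in G -> N i = 0.
    case: (boolP [exists F in B, [forall i in F, N i == 0]]) =>
        [/existsP[G /andP[GB /forallP hG]]|none].
      exists G => // i iG; move: (hG i); rewrite iG => /= /eqP //.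
    exfalso; apply: nJ => F FB; move/existsPn: none => /(_ F).
    rewrite FB /= => /forallPn [i]; rewrite negb_imply => /andP[iF Ni].
    by apply/existsP; exists i; rewrite iF lt0n.
  pose C1 := [set F in B | [forall i in F, N i == 0]].
  have minJN : forall F, minprime (colon (coverJ B) N) F <-> F \in C1.
    apply: minprime_cover.
    + move=> m; split.
      * move=> h F; rewrite inE => /andP[FB /forallP hF].
        case/existsP: (h F FB) => i /andP[iF]; rewrite /mmul ffunE.
        move: (hF i); rewrite iF /= => /eqP ->; rewrite addn0 => mi.
        by apply/existsP; exists i; rewrite iF.
      * move=> h F FB; case: (boolP [forall i in F, N i == 0]) => hF.
          have := h F; rewrite inE FB hF => /(_ isT) /existsP [i /andP [iF mi]].
          by apply/existsP; exists i; rewrite iF /mmul ffunE ltn_addr.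
        move/forallPn: hF => [i]; rewrite negb_imply => /andP[iF Ni].
        by apply/existsP; exists i; rewrite iF /mmul ffunE addn_gt0 (lt0n (N i)) Ni orbT.
    + move=> F1 F2; rewrite !inE => /andP[h1 _] /andP[h2 _]; exact: hac.
  move=> m; split.
  + case=> s [sq sy sd]; exists (tind N s); split.
    * exact: tind_sq.
    * move=> F /minJ FB; rewrite /in_pF_pow.
      apply: (reach (S:=S) (G:=G) hex GB _ _ _ _ FB).
      - by move=> H HB _ x xG; rewrite inE (GS x xG).
      - by move=> x; rewrite inE ffunE => ->; rewrite orbT.
      - by move=> x; rewrite ffunE; case: ifP.
      - move=> H HB hHS.
        have HC1 : H \in C1.
          rewrite inE HB; apply/forallP => i; apply/implyP => iH.
          rewrite -leqn0 leqNgt; apply/negP => Np.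
          have := hHS i; rewrite inE Np iH => /(_ isT) /esym iG.
          by move: Np; rewrite GS.
        have := sy H (proj2 (minJN H) HC1); rewrite /in_pF_pow => h.
        apply: leq_trans h _; apply: leq_sum => i _; exact: tind_ge.
    * exact: tind_div.
  + case=> s [sq sy sd]; exists (sN N s); split.
    * exact: sN_sq.
    * move=> F /minJN; rewrite inE => /andP[FB /forallP hF].
      have := sy F (proj2 (minJ F) FB); rewrite /in_pF_pow.
      suff -> : \sum_(i in F) sN N s i = \sum_(i in F) s i by [].
      apply: eq_bigr => i iF; rewrite ffunE.
      by move: (hF i); rewrite iF /= => /eqP ->.
    * exact: sN_div.
- move=> [JN hmin] v Nv l hl.
  pose M : mon n := [ffun i => if i == v then 0 else N i].
  have nJM : ~ coverJ B M.
    apply: hmin.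
      by move=> i; rewrite ffunE; case: ifP.
    move/(congr1 (fun f : mon n => f v)); rewrite ffunE eqxx => h.
    by rewrite -h in Nv.
  have [G GB nG] : exists2 G, G \in B & ~~ in_pF G M.
    case: (boolP [exists F in B, ~~ in_pF F M]) => [/existsP[G /andP[GB hG]]|none].
      by exists G.
    exfalso; apply: nJM => F FB; move/existsPn: none => /(_ F).
    by rewrite FB /= negbK.
  have GS : forall i, i \in G -> i != v -> N i = 0.
    move=> i iG iv; apply/eqP; rewrite -leqn0 leqNgt; apply/negP => Np.
    move/negP: nG; apply; apply/existsP; exists i; by rewrite iG ffunE (negbTE iv).
  have vG : v \in G.
    case/existsP: (JN G GB) => i /andP[iG Ni].
    case: (eqVneq i v) => [<-//|iv].
    by move: Ni; rewrite GS.
  have cardv : forall F : {set 'I_n}, #|F :&: [set v]| = (v \in F).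
    move=> F; case: (boolP (v \in F)) => vF.
      have -> : F :&: [set v] = [set v] by apply/setIidPr; rewrite sub1set.
      by rewrite cards1.
    have -> : F :&: [set v] = set0.
      by apply/setP => x; rewrite !inE andbC; case: eqP => // ->; exact: negbTE vF.
    by rewrite cards0.
  have mr : mrank B [set v] = 1.
    apply/eqP; rewrite eqn_leq; apply/andP; split.
      apply/bigmax_leqP => F _; rewrite -(cards1 v); apply: subset_leq_card.
      exact: subsetIr.
    rewrite /mrank; have <- : #|G :&: [set v]| = 1 by rewrite cardv vG.
    exact: leq_bigmax_cond.
  pose C2 := [set F' : {set 'I_n} | [&& v \notin F', [forall i in F', N i == 0] & v |: F' \in B]].
  have minJ'N : forall F', minprime (colon (coverJ (contract B [set v])) N) F' <-> F' \in C2.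
    apply: minprime_cover.
    + move=> m; split.
      * move=> h F'; rewrite inE => /and3P[vF' /forallP hF' vFB].
        have : F' \in contract B [set v].
          apply/imsetP; exists (v |: F').
            by rewrite inE vFB /= cardv mr setU11.
          apply/setP => x; rewrite !inE; case: eqP => [->|] //=.
          by rewrite (negbTE vF').
        move/h/existsP => [i /andP[iF']]; rewrite /mmul ffunE.
        move: (hF' i); rewrite iF' /= => /eqP ->; rewrite addn0 => mi.
        by apply/existsP; exists i; rewrite iF'.
      * move=> h F'' /imsetP [F]; rewrite inE => /andP[FB hc] ->.
        have vF : v \in F by move: hc; rewrite cardv mr; case: (v \in F).
        case: (boolP [forall i in F :\: [set v], N i == 0]) => hF.
          have : F :\: [set v] \in C2.
            rewrite inE; apply/and3P; split => //; first by rewrite !inE eqxx.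
            by rewrite setD1K.
          move/h/existsP => [i /andP[iF mi]].
          by apply/existsP; exists i; rewrite iF /mmul ffunE ltn_addr.
        move/forallPn: hF => [i]; rewrite negb_imply => /andP[iF Ni].
        by apply/existsP; exists i; rewrite iF /mmul ffunE addn_gt0 (lt0n (N i)) Ni orbT.
    + move=> F1 F2; rewrite !inE => /and3P[v1 _ b1] /and3P[v2 _ b2] sub.
      have := hac _ _ b1 b2 (setUS _ sub).
      move/subsetP => h; apply/subsetP => x xF2.
      have : x \in v |: F1 by apply: h; rewrite !inE xF2 orbT.
      rewrite !inE => /orP[/eqP xv|//].
      by move: v2; rewrite -xv xF2.
  move=> m; split.
  + case=> s [sq sy sd]; exists (sN N s); split.
    * exact: sN_sq.
    * move=> F' /minJ'N; rewrite inE => /and3P[vF' /forallP hF' FB].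
      have := sy _ (proj2 (minJ _) FB); rewrite /in_pF_pow big_setU1 //=.
      have -> : \sum_(i in F') sN N s i = \sum_(i in F') s i.
        apply: eq_bigr => i iF; rewrite ffunE.
        by move: (hF' i); rewrite iF /= => /eqP ->.
      move=> h; rewrite leq_subLR; apply: leq_trans h _; rewrite leq_add2r; exact: sq.
    * exact: sN_div.
  + case=> s [sq sy sd]; exists (tind N s); split.
    * exact: tind_sq.
    * move=> F /minJ FB; rewrite /in_pF_pow.
      apply: (reach (S:=S) (G:=G) hex GB _ _ _ _ FB).
      - move=> H HB hsub x xG xS.
        case: (eqVneq x v) => [->|xv]; last by move: xS; rewrite inE (GS x xG xv).
        case/existsP: (JN H HB) => i /andP[iH Ni].
        case: (eqVneq i v) => [<-//|iv].
        have iG := hsub i iH (eq_ind_r _ Ni (in_set _ _)).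
        by move: Ni; rewrite (GS i iG iv).
      - by move=> x; rewrite inE ffunE => ->; rewrite orbT.
      - by move=> x; rewrite ffunE; case: ifP.
      - move=> H HB hHG.
        have vS : v \in S by rewrite inE.
        have vH : v \in H by rewrite hHG.
        have HC2 : H :\ v \in C2.
          rewrite inE; apply/and3P; split; [by rewrite !inE eqxx | | by rewrite setD1K].
          apply/forallP => i; apply/implyP; rewrite !inE => /andP[iv iH].
          rewrite -leqn0 leqNgt; apply/negP => Np.
          have := hHG i; rewrite inE Np iH => /(_ isT) /esym iG.
          by move: Np; rewrite (GS i iG iv).
        have := sy _ (proj2 (minJ'N _) HC2); rewrite /in_pF_pow (big_setD1 v vH) /= => h.
        have -> : tind N s v = 1 by rewrite ffunE Nv orbT.
        apply: (@leq_trans (1 + (l - 1))); first by rewrite -leq_subLR.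
        rewrite leq_add2l; apply: leq_trans h _; apply: leq_sum => i _; exact: tind_ge.
    * exact: tind_div.
Qed.
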